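(* The $C^*$-algebra $\bigoplus^0_{n\in\mathbb{N}}M_n(\mathbb{C})$ is symmetrically pseudo-amenable.
   Context: $M_n(\mathbb{C})$ is the algebra of complex $n\times n$ matrices (with its $C^*$-norm). $\bigoplus^0_{n\in\mathbb{N}}M_n(\mathbb{C})$ is the set of sequences $(x_n)$ with $x_n\in M_n(\mathbb{C})$ and $\|x_n\|\to0$, with the sup norm and coordinatewise operations. For a Banach algebra $\mathfrak{U}$, $\mathfrak{U}\widehat{\otimes}\mathfrak{U}$ is the projective tensor product, with $a(b\otimes c)=ab\otimes c$, $(b\otimes c)a=b\otimes ca$, and $\pi(b\otimes c)=bc$ (extended linearly and continuously). The flip is $(b\otimes c)^{\circ}=c\otimes b$; $\mathbf{t}$ is symmetric if $\mathbf{t}^\circ=\mathbf{t}$. An approximate diagonal is a net $\{\mathbf{t}_\lambda\}$ in $\mathfrak{U}\widehat{\otimes}\mathfrak{U}$ (not necessarily bounded) with $a\mathbf{t}_\lambda-\mathbf{t}_\lambda a\to0$ and $\pi(\mathbf{t}_\lambda)a\to a$ for all $a\in\mathfrak{U}$. $\mathfrak{U}$ is symmetrically pseudo-amenable if it has an approximate diagonal consisting of symmetric elements. *)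

(* Defs.v *)
From HB Require Import structures.
From mathcomp Require Import all_boot all_order all_algebra.
From mathcomp Require Import all_classical all_reals.
From mathcomp Require Import topology normedtype sequences.
From mathcomp Require Import complex.
From Stdlib Require List.
Set Implicit Arguments. Unset Strict Implicit. Unset Printing Implicit Defensive.
Import Order.TTheory GRing.Theory Num.Theory.
Import numFieldNormedType.Exports.
Local Open Scope classical_set_scope.
Local Open Scope ring_scope.

Section Defs.
Variable R : realType.
Local Notation C := (complex R).

Definition vnorm (m : nat) (v : 'cV[C]_m) : R :=
  Num.sqrt (\sum_(i < m) (complex.Re (v i ord0) ^+ 2 + complex.Im (v i ord0) ^+ 2)).

Definition opnorm (m : nat) (A : 'M[C]_m) : R :=
  sup [set vnorm (A *m v) | v in [set v : 'cV[C]_m | vnorm v <= 1]].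

(** Ambient type: all sequences (x_n)_{n >= 1} with x_n in M_n(C)
    (index k stands for n = k+1). *)
Definition mxseq := forall k : nat, 'M[C]_k.+1.

Definition in_c0 (x : mxseq) : Prop :=
  (fun k => opnorm (x k)) @ \oo --> (0 : R).

Definition supnorm (x : mxseq) : R := sup (range (fun k => opnorm (x k))).

Definition sadd (x y : mxseq) : mxseq := fun k => x k + y k.
Definition sopp (x : mxseq) : mxseq := fun k => - x k.
Definition smul (x y : mxseq) : mxseq := fun k => x k *m y k.
Definition sscale (c : C) (x : mxseq) : mxseq := fun k => c *: x k.
Definition szero : mxseq := fun k => 0.

(** A formal tensor is a finite list of pairs, sum of x (x) y. *)
Definition ftensor := seq (mxseq * mxseq).

Fixpoint tinU (t : ftensor) : Prop :=
  match t with
  | [::] => True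
  | p :: t' => in_c0 p.1 /\ in_c0 p.2 /\ tinU t'
  end.

(** Free vector space over U x U: finitely supported functions. *)
Definition delta (z : mxseq * mxseq) : mxseq * mxseq -> C :=
  fun w => (asbool (z = w))%:R.

Definition fs (t : ftensor) : mxseq * mxseq -> C :=
  fun w => \sum_(p <- t) delta p w.

(** Generators of the bilinearity relations (with entries in U). *)
Definition tensor_rel (g : mxseq * mxseq -> C) : Prop :=
  (exists x x' y, [/\ in_c0 x, in_c0 x' & in_c0 y] /\
     (g = (fun w => delta (sadd x x', y) w - delta (x, y) w - delta (x', y) w) \/
      g = (fun w => delta (y, sadd x x') w - delta (y, x) w - delta (y, x') w)))
  \/
  (exists (c : C) x y, in_c0 x /\ in_c0 y /\
     (g = (fun w => delta (sscale c x, y) w - c * delta (x, y) w) \/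
      g = (fun w => delta (x, sscale c y) w - c * delta (x, y) w))).

(** Equality in the algebraic tensor product: the difference of the formal
    sums lies in the span of the bilinearity relations. *)
Definition tequiv (t t' : ftensor) : Prop :=
  exists s : seq (C * (mxseq * mxseq -> C)),
    (forall q, List.In q s -> tensor_rel q.2) /\
    forall w, fs t w - fs t' w = \sum_(q <- s) q.1 * q.2 w.

Definition projnorm (t : ftensor) : R :=
  inf [set \sum_(p <- t') (supnorm p.1 * supnorm p.2) |
        t' in [set t' : ftensor | tinU t' /\ tequiv t' t]].

Definition tsub (t t' : ftensor) : ftensor :=
  t ++ map (fun p => (sopp p.1, p.2)) t'.
Definition tlmul (a : mxseq) (t : ftensor) : ftensor :=
  map (fun p => (smul a p.1, p.2)) t.
Definition trmul (t : ftensor) (a : mxseq) : ftensor :=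
  map (fun p => (p.1, smul p.2 a)) t.
Definition tflip (t : ftensor) : ftensor := map (fun p => (p.2, p.1)) t.
Definition tpi (t : ftensor) : mxseq :=
  foldr sadd szero (map (fun p => smul p.1 p.2) t).

(** Elements are represented by Cauchy sequences (for the projective norm)
    of algebraic tensors; two representatives are identified when their
    distance is 0. *)
Definition ptensor := nat -> ftensor.

Definition pt_valid (u : ptensor) : Prop :=
  (forall k, tinU (u k)) /\
  forall e : R, 0 < e -> exists N, forall k l, (N <= k)%N -> (N <= l)%N ->
    projnorm (tsub (u k) (u l)) < e.

Definition ptnorm (u : ptensor) : R := limn (fun k => projnorm (u k)).

Definition ptsub (u v : ptensor) : ptensor := fun k => tsub (u k) (v k).
Definition ptlmul (a : mxseq) (u : ptensor) : ptensor := fun k => tlmul a (u k).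
Definition ptrmul (u : ptensor) (a : mxseq) : ptensor := fun k => trmul (u k) a.
Definition ptflip (u : ptensor) : ptensor := fun k => tflip (u k).

Definition pt_symmetric (u : ptensor) : Prop := ptnorm (ptsub (ptflip u) u) = 0.

(** || pi(u) a - a ||, where pi is the continuous extension of
    multiplication: pi(u) = lim_k pi(u_k) in U. *)
Definition pi_defect (u : ptensor) (a : mxseq) : R :=
  limn (fun k => supnorm (sadd (smul (tpi (u k)) a) (sopp a))).

Definition directed (I : Type) (le : I -> I -> Prop) : Prop :=
  [/\ (exists i : I, True), (forall i, le i i),
      (forall i j k, le i j -> le j k -> le i k) &
      (forall i j, exists k, le i k /\ le j k)].

Definition net_to0 (I : Type) (le : I -> I -> Prop) (r : I -> R) : Prop :=
  forall e : R, 0 < e -> exists i0, forall i, le i0 i -> `|r i| < e.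

Definition symmetric_approx_diagonal (I : Type) (le : I -> I -> Prop)
    (t : I -> ptensor) : Prop :=
  directed le /\
  (forall i, pt_valid (t i)) /\
  (forall i, pt_symmetric (t i)) /\
  (forall a, in_c0 a ->
     net_to0 le (fun i => ptnorm (ptsub (ptlmul a (t i)) (ptrmul (t i) a)))) /\
  (forall a, in_c0 a -> net_to0 le (fun i => pi_defect (t i) a)).

Definition c0_Mn_symm_pseudo_amenable : Prop :=
  exists (I : Type) (le : I -> I -> Prop) (t : I -> ptensor),
    symmetric_approx_diagonal le t.

End Defs.

(* Main.v *)
Set Warnings "-notation-overridden -ambiguous-paths -notation-incompatible-prefix -deprecated".
From HB Require Import structures.
From mathcomp Require Import all_boot all_order all_algebra.
From mathcomp Require Import all_classical all_reals.
From mathcomp Require Import topology normedtype sequences.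
From mathcomp Require Import complex.
Require Import Defs.
Set Implicit Arguments. Unset Strict Implicit. Unset Printing Implicit Defensive.
Import Order.TTheory GRing.Theory Num.Theory.
Import numFieldNormedType.Exports.
Local Open Scope classical_set_scope.
Local Open Scope ring_scope.

Section P.
Variable R : realType.
Local Notation C := (complex R).
Local Notation U := (mxseq R).
Local Notation F := (U * U -> C).

Lemma vnorm0 m : vnorm (0 : 'cV[C]_m) = 0.
Proof.
rewrite /vnorm big1 ?sqrtr0 // => i _; rewrite mxE /=.
by rewrite expr0n /= addr0.
Qed.

Lemma opnorm_ge0 m (A : 'M[C]_m) : 0 <= opnorm A.
Proof.
rewrite /opnorm.
set S := [set _ | _ in _].
have S0 : S 0 by exists 0; rewrite /= ?vnorm0 ?mulmx0 ?vnorm0.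
have [hs|hs] := pselect (has_sup S).
  exact: (sup_upper_bound hs).
by rewrite sup_out.
Qed.

Lemma vnormN m (w : 'cV[C]_m) : vnorm (- w) = vnorm w.
Proof.
rewrite /vnorm; congr Num.sqrt; apply: eq_bigr => i _.
rewrite mxE; case: (w i ord0) => a b /=. by rewrite !sqrrN.
Qed.

Lemma opnormN m (A : 'M[C]_m) : opnorm (- A) = opnorm A.
Proof.
rewrite /opnorm; congr sup; apply/seteqP; split => x [v Hv <-]; exists v => //;
by rewrite mulNmx vnormN.
Qed.

Lemma opnorm0 m : opnorm (0 : 'M[C]_m) = 0.
Proof.
apply/eqP; rewrite eq_le opnorm_ge0 andbT /opnorm.
apply: ge_sup; first by exists 0, 0 => //; rewrite /= ?vnorm0 ?mul0mx ?vnorm0.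
by move=> x [v _ <-]; rewrite mul0mx vnorm0.
Qed.

Lemma ev_cvg (f : nat -> R) N : (forall k, (N <= k)%N -> f k = 0) -> f @ \oo --> (0:R).
Proof.
move=> H. apply: cvg_near_cst. by exists N => // k /= Hk; rewrite H.
Qed.

Lemma c0_lt (f : nat -> R) e : f @ \oo --> (0:R) -> 0 < e -> exists N, forall k, (N <= k)%N -> `|f k| < e.
Proof.
move=> /cvgrPdist_lt H He. have [N _ HN] := H e He. exists N => k Hk. 
have := HN k Hk. by rewrite sub0r normrN.
Qed.

Lemma supnorm_ge0 (x : mxseq R) : 0 <= supnorm x.
Proof.
rewrite /supnorm.
have [hs|hs] := pselect (has_sup (range (fun k => opnorm (x k)))).
  apply: le_trans (opnorm_ge0 (x 0%N)) _.
  by apply: (sup_upper_bound hs); exists 0%N.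
by rewrite sup_out.
Qed.

Lemma supnorm_le (x : mxseq R) b : (forall k, opnorm (x k) <= b) -> supnorm x <= b.
Proof.
move=> H; apply: ge_sup; first by exists (opnorm (x 0%N)), 0%N.
by move=> y [k _ <-].
Qed.

Definition ev0 (x : mxseq R) := exists N, forall k, (N <= k)%N -> x k = 0.

Lemma ev0_c0 x : ev0 x -> in_c0 x.
Proof.
move=> [N HN]; apply: (@ev_cvg _ N) => k /HN ->; exact: opnorm0.
Qed.

Lemma ev0_add x y : ev0 x -> ev0 y -> ev0 (sadd x y).
Proof.
move=> [N HN] [M HM]; exists (maxn N M) => k; rewrite geq_max => /andP[h1 h2].
by rewrite /sadd HN // HM // addr0.
Qed.

Lemma ev0_scale c x : ev0 x -> ev0 (sscale c x).
Proof. by move=> [N HN]; exists N => k /HN; rewrite /sscale => ->; rewrite scaler0. Qed.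

Lemma ev0_opp x : ev0 x -> ev0 (sopp x).
Proof. by move=> [N HN]; exists N => k /HN; rewrite /sopp => ->; rewrite oppr0. Qed.

Lemma ev0_mull a x : ev0 x -> ev0 (smul a x).
Proof. by move=> [N HN]; exists N => k /HN; rewrite /smul => ->; rewrite mulmx0. Qed.

Lemma ev0_mulr a x : ev0 x -> ev0 (smul x a).
Proof. by move=> [N HN]; exists N => k /HN; rewrite /smul => ->; rewrite mul0mx. Qed.

Lemma ev0_zero : ev0 (szero R).
Proof. by exists 0%N. Qed.

Lemma projnorm0 (t : ftensor R) : tequiv [::] t -> projnorm t = 0.
Proof.
move=> H; rewrite /projnorm.
set S := (X in inf X).
have S0 : S 0 by exists [::]; rewrite ?big_nil.
have lb : lbound S 0.
  move=> z [t' _ <-]. apply: sumr_ge0 => p _; by rewrite mulr_ge0 ?supnorm_ge0.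
apply/eqP; rewrite eq_le; apply/andP; split.
  by apply: (ge_inf (ex_intro _ 0 lb)).
by apply: lb_le_inf => //; exists 0.
Qed.

Definition inW (f : F) := exists s : seq (C * F),
  (forall q, List.In q s -> tensor_rel q.2) /\ forall w, f w = \sum_(q <- s) q.1 * q.2 w.

Lemma inW_ext f g : inW f -> (forall w, f w = g w) -> inW g.
Proof. by move=> [s [H1 H2]] E; exists s; split => // w; rewrite -E. Qed.

Lemma inW0 : inW (fun _ => 0).
Proof. by exists [::]; split => // w; rewrite big_nil. Qed.

Lemma inW_add f g : inW f -> inW g -> inW (fun w => f w + g w).
Proof.
move=> [s [H1 H2]] [s' [H1' H2']]; exists (s ++ s'); split.
  by move=> q Hq; case: (List.in_app_or _ _ _ Hq); [exact: H1| exact: H1'].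
by move=> w; rewrite big_cat H2 H2'.
Qed.

Lemma inW_scale c f : inW f -> inW (fun w => c * f w).
Proof.
move=> [s [H1 H2]]; exists (map (fun q => (c * q.1, q.2)) s); split.
  by move=> q /List.in_map_iff [q' [<- /H1]].
by move=> w; rewrite big_map H2 mulr_sumr; apply: eq_bigr => q _; rewrite mulrA.
Qed.

Lemma inW_gen g : tensor_rel g -> inW g.
Proof. by move=> H; exists [:: (1, g)]; split => [q [<-|[]]|w] //; rewrite big_seq1 mul1r. Qed.

Lemma inW_opp f : inW f -> inW (fun w => - f w).
Proof. move=> H; apply: (inW_ext (inW_scale (-1) H)) => w; by rewrite mulN1r. Qed.

Lemma inW_sum (I : Type) (s : seq I) (G : I -> F) :
  (forall i, inW (G i)) -> inW (fun w => \sum_(i <- s) G i w).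
Proof.
move=> H; elim: s => [|i s IH].
  by apply: (inW_ext inW0) => w; rewrite big_nil.
by apply: (inW_ext (inW_add (H i) IH)) => w; rewrite big_cons.
Qed.

Definition feq (f g : F) := inW (fun w => f w - g w).

Lemma feq_refl f : feq f f.
Proof. by apply: (inW_ext inW0) => w; rewrite subrr. Qed.

Lemma feq_sym f g : feq f g -> feq g f.
Proof. by move=> H; apply: (inW_ext (inW_opp H)) => w; rewrite opprB. Qed.

Lemma feq_trans f g h : feq f g -> feq g h -> feq f h.
Proof. by move=> H1 H2; apply: (inW_ext (inW_add H1 H2)) => w; rewrite addrA subrK. Qed.

Lemma feq_add f g f' g' : feq f g -> feq f' g' -> feq (fun w => f w + f' w) (fun w => g w + g' w).
Proof. by move=> H1 H2; apply: (inW_ext (inW_add H1 H2)) => w; rewrite opprD addrACA. Qed.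

Lemma feq_scale c f g : feq f g -> feq (fun w => c * f w) (fun w => c * g w).
Proof. by move=> H; apply: (inW_ext (inW_scale c H)) => w; rewrite mulrBr. Qed.

Lemma feq_opp f g : feq f g -> feq (fun w => - f w) (fun w => - g w).
Proof. by move=> H; apply: (inW_ext (inW_opp H)) => w; rewrite opprD. Qed.

Lemma feq_ext f g f' g' : feq f g -> (forall w, f w = f' w) -> (forall w, g w = g' w) -> feq f' g'.
Proof. by move=> H E1 E2; apply: (inW_ext H) => w; rewrite E1 E2. Qed.

Lemma feq_sum (I : Type) (s : seq I) (G H : I -> F) :
  (forall i, feq (G i) (H i)) -> feq (fun w => \sum_(i <- s) G i w) (fun w => \sum_(i <- s) H i w).
Proof. by move=> E; apply: (inW_ext (inW_sum s E)) => w; rewrite sumrB. Qed.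

Lemma D_addl x x' y : ev0 x -> ev0 x' -> ev0 y ->
  feq (delta (sadd x x', y)) (fun w => delta (x, y) w + delta (x', y) w).
Proof.
move=> hx hx' hy.
have G : tensor_rel (fun w => delta (sadd x x', y) w - delta (x, y) w - delta (x', y) w).
  left; exists x, x', y; split; first by split; apply: ev0_c0.
  by left.
by apply: (inW_ext (inW_gen G)) => w; rewrite opprD addrA.
Qed.

Lemma D_addr x x' y : ev0 x -> ev0 x' -> ev0 y ->
  feq (delta (y, sadd x x')) (fun w => delta (y, x) w + delta (y, x') w).
Proof.
move=> hx hx' hy.
have G : tensor_rel (fun w => delta (y, sadd x x') w - delta (y, x) w - delta (y, x') w).
  left; exists x, x', y; split; first by split; apply: ev0_c0.
  by right.
by apply: (inW_ext (inW_gen G)) => w; rewrite opprD addrA.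
Qed.

Lemma D_scalel c x y : ev0 x -> ev0 y ->
  feq (delta (sscale c x, y)) (fun w => c * delta (x, y) w).
Proof.
move=> hx hy; apply: inW_gen; right.
exists c, x, y; split; first exact: ev0_c0. split; first exact: ev0_c0.
by left.
Qed.

Lemma D_scaler c x y : ev0 x -> ev0 y ->
  feq (delta (x, sscale c y)) (fun w => c * delta (x, y) w).
Proof.
move=> hx hy; apply: inW_gen; right.
exists c, x, y; split; first exact: ev0_c0. split; first exact: ev0_c0.
by right.
Qed.

Lemma sscale0 : sscale 0 (szero R) = szero R.
Proof. by apply: functional_extensionality_dep => k; rewrite /sscale /szero scaler0. Qed.

Lemma D_zerol y : ev0 y -> feq (delta (szero R, y)) (fun _ => 0).
Proof.
move=> hy; apply: (feq_ext (D_scalel 0 ev0_zero hy)) => w; by rewrite ?sscale0 ?mul0r.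
Qed.

Lemma D_zeror y : ev0 y -> feq (delta (y, szero R)) (fun _ => 0).
Proof.
move=> hy; apply: (feq_ext (D_scaler 0 hy ev0_zero)) => w; by rewrite ?sscale0 ?mul0r.
Qed.

Lemma sopp_scale (x : U) : sopp x = sscale (-1) x.
Proof. by apply: functional_extensionality_dep => k; rewrite /sscale /sopp scaleN1r. Qed.

Lemma D_oppl x y : ev0 x -> ev0 y -> feq (delta (sopp x, y)) (fun w => - delta (x, y) w).
Proof.
move=> hx hy; apply: (feq_ext (D_scalel (-1) hx hy)) => w; by rewrite ?sopp_scale ?mulN1r.
Qed.

Definition msum (I : Type) (s : seq I) (f : I -> U) : U := foldr (fun i acc => sadd (f i) acc) (szero R) s.

Lemma msumE (I : Type) (s : seq I) (f : I -> U) k : msum s f k = \sum_(i <- s) f i k.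
Proof. by elim: s => [|i s IH] /=; rewrite ?big_nil ?big_cons // /sadd IH. Qed.

Lemma ev0_msum (I : Type) (s : seq I) (f : I -> U) : (forall i, ev0 (f i)) -> ev0 (msum s f).
Proof. by move=> H; elim: s => [|i s IH] /=; [exact: ev0_zero| exact: ev0_add]. Qed.

Lemma D_suml (I : Type) (s : seq I) (f : I -> U) y : (forall i, ev0 (f i)) -> ev0 y ->
  feq (delta (msum s f, y)) (fun w => \sum_(i <- s) delta (f i, y) w).
Proof.
move=> hf hy; elim: s => [|i s IH] /=.
  by apply: (feq_ext (D_zerol hy)) => w; rewrite ?big_nil.
apply: feq_trans (D_addl (hf i) (ev0_msum s hf) hy) _.
apply: (feq_ext (feq_add (feq_refl (delta (f i, y))) IH)) => // w.
by rewrite big_cons.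
Qed.

Lemma D_sumr (I : Type) (s : seq I) (f : I -> U) y : (forall i, ev0 (f i)) -> ev0 y ->
  feq (delta (y, msum s f)) (fun w => \sum_(i <- s) delta (y, f i) w).
Proof.
move=> hf hy; elim: s => [|i s IH] /=.
  by apply: (feq_ext (D_zeror hy)) => w; rewrite ?big_nil.
apply: feq_trans (D_addr (hf i) (ev0_msum s hf) hy) _.
apply: (feq_ext (feq_add (feq_refl (delta (y, f i))) IH)) => // w.
by rewrite big_cons.
Qed.

Lemma fs_cat (t t' : ftensor R) w : fs (t ++ t') w = fs t w + fs t' w.
Proof. by rewrite /fs big_cat. Qed.

Lemma fs_map (T : Type) (s : seq T) (g : T -> U * U) w : fs (map g s) w = \sum_(i <- s) delta (g i) w.
Proof. by rewrite /fs big_map. Qed.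

Lemma fs_nil w : fs ([::] : ftensor R) w = 0.
Proof. by rewrite /fs big_nil. Qed.

Fixpoint evl (t : ftensor R) := if t is p :: t' then [/\ ev0 p.1, ev0 p.2 & evl t'] else True.

Lemma evl_cat t t' : evl (t ++ t') <-> evl t /\ evl t'.
Proof.
elim: t => [|p t IH] /=; first by intuition.
split => [[a b /IH [c d]] | [[a b c] d]]; first by split.
by split => //; apply/IH.
Qed.

Lemma evl_tinU t : evl t -> tinU t.
Proof. elim: t => [|p t IH] //= [h1 h2 h3]; split; [exact: ev0_c0|split; [exact: ev0_c0|exact: IH]]. Qed.

Lemma fs_neg t : evl t -> feq (fs (map (fun p => (sopp p.1, p.2)) t)) (fun w => - fs t w).
Proof.
elim: t => [|[x y] t IH] /= H.
  by apply: (feq_ext (feq_refl (fun _ => 0))) => w; rewrite fs_nil ?oppr0.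
case: H => /= hx hy ht.
apply: (feq_ext (feq_add (D_oppl hx hy) (IH ht))) => w.
  by rewrite /fs big_cons.
by rewrite /fs big_cons opprD.
Qed.

Lemma tequiv_nil t : feq (fs t) (fun _ => 0) -> tequiv [::] t.
Proof. by move=> H; apply: (inW_ext (inW_opp H)) => w; rewrite fs_nil subr0 sub0r. Qed.

Lemma tsub_zero t t' : evl t' -> feq (fs t) (fs t') -> feq (fs (tsub t t')) (fun _ => 0).
Proof.
move=> h E; rewrite /tsub.
apply: (feq_ext (feq_add E (fs_neg h))) => w; by rewrite ?fs_cat ?subrr.
Qed.


Lemma M1 m (a : 'M[C]_m) (i j : 'I_m) : a *m delta_mx i j = \sum_l a l i *: delta_mx l j.
Proof.
apply/matrixP => r s; rewrite !mxE summxE (bigD1 i) //= big1 => [|l /negbTE nl].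
  rewrite !mxE eqxx /= addr0 (bigD1 r) //= big1 => [|l /negbTE nl]; last by rewrite !mxE eq_sym nl /= mulr0.
  by rewrite !mxE eqxx /= addr0 mulrC.
by rewrite !mxE nl /= mulr0.
Qed.


Lemma M2 m (a : 'M[C]_m) (i j : 'I_m) : delta_mx j i *m a = \sum_l a i l *: delta_mx j l.
Proof.
apply/matrixP => r s; rewrite !mxE summxE.
rewrite (bigD1 i) //= big1 => [|l /negbTE nl]; last by rewrite !mxE nl andbF mul0r.
rewrite (bigD1 s) //= big1 => [|l /negbTE nl]; last by rewrite !mxE [s == l]eq_sym nl andbF mulr0.
rewrite !mxE !eqxx !andbT !addr0.
by case: (r == j); rewrite ?mulr1 ?mulr0 ?mul1r ?mul0r.
Qed.

Lemma M3 n : \sum_(i < n.+1) \sum_(j < n.+1) (delta_mx i j *m delta_mx j i : 'M[C]_n.+1) = (n.+1)%:R *: 1.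
Proof.
under eq_bigr => i _ do under eq_bigr => j _ do rewrite mul_delta_mx.
apply/matrixP => r s.
rewrite summxE (eq_bigr (fun i => ((n.+1)%:R * ((r == i) && (s == i))%:R : C))) => [|i _]; last first.
  by rewrite summxE (eq_bigr (fun _ => ((r == i) && (s == i))%:R)) ?sumr_const ?card_ord ?mulr_natl // => j _; rewrite mxE.
rewrite (bigD1 r) //= big1 => [|i ni]; last by rewrite eq_sym (negbTE ni) mulr0.
by rewrite !mxE eqxx /= addr0 eq_sym.
Qed.


Definition E (n i j : nat) : U := fun k => if k == n then delta_mx (inord i) (inord j) else 0.

Lemma E_ev0 n i j : ev0 (E n i j).
Proof.
exists n.+1 => k hk; rewrite /E; case: eqVneq => // e.
by move: hk; rewrite e ltnn.
Qed.

Lemma smul_El (a : U) n (i j : 'I_n.+1) :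
  smul a (E n i j) = msum (index_enum 'I_n.+1) (fun l : 'I_n.+1 => sscale (a n l i) (E n l j)).
Proof.
apply: functional_extensionality_dep => k; rewrite /smul msumE /E.
case: eqVneq => [->|ne].
  rewrite !inord_val M1; apply: eq_bigr => l _; by rewrite /sscale eqxx !inord_val.
rewrite mulmx0 big1 // => l _; by rewrite /sscale (negbTE ne) scaler0.
Qed.

Lemma smul_Er (a : U) n (i j : 'I_n.+1) :
  smul (E n j i) a = msum (index_enum 'I_n.+1) (fun l : 'I_n.+1 => sscale (a n i l) (E n j l)).
Proof.
apply: functional_extensionality_dep => k; rewrite /smul msumE /E.
case: eqVneq => [->|ne].
  rewrite !inord_val M2; apply: eq_bigr => l _; by rewrite /sscale eqxx !inord_val.
rewrite mul0mx big1 // => l _; by rewrite /sscale (negbTE ne) scaler0.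
Qed.

Lemma smul_scalel (a x : U) c : smul a (sscale c x) = sscale c (smul a x).
Proof. by apply: functional_extensionality_dep => k; rewrite /smul /sscale scalemxAr. Qed.

Definition cf (n : nat) : C := ((n.+1)%:R)^-1.

Definition idx N : seq (nat * nat * nat) :=
  flatten [seq [seq (nat_of_ord n, nat_of_ord i, nat_of_ord j) | i <- index_enum 'I_n.+1, j <- index_enum 'I_n.+1]
          | n <- index_enum 'I_N].

Definition pr (q : nat * nat * nat) : U * U :=
  (sscale (cf q.1.1) (E q.1.1 q.1.2 q.2), E q.1.1 q.2 q.1.2).

Definition tN N : ftensor R := map pr (idx N).

Lemma sum_idx (V : zmodType) N (G : nat * nat * nat -> V) :
  \sum_(q <- idx N) G q = \sum_(n < N) \sum_(i < n.+1) \sum_(j < n.+1) G (nat_of_ord n, nat_of_ord i, nat_of_ord j).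
Proof.
rewrite /idx big_flatten big_map; apply: eq_bigr => n _.
by rewrite big_allpairs_dep.
Qed.

Lemma evl_map (T : Type) (s : seq T) (g : T -> U * U) :
  (forall x, ev0 (g x).1 /\ ev0 (g x).2) -> evl (map g s).
Proof. by move=> H; elim: s => [|x s IH] //=; case: (H x) => h1 h2; split. Qed.

Lemma evl_tN N : evl (tN N).
Proof. apply: evl_map => q; split; [apply: ev0_scale|]; exact: E_ev0. Qed.


Definition SN N : F := fun w => \sum_(n < N) \sum_(i < n.+1) \sum_(j < n.+1)
   cf n * delta (E n i j, E n j i) w.

Lemma L_fs N : feq (fs (tN N)) (SN N).
Proof.
have H : feq (fun w => \sum_(n < N) \sum_(i < n.+1) \sum_(j < n.+1) delta (pr (nat_of_ord n, nat_of_ord i, nat_of_ord j)) w) (SN N).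
  apply: feq_sum => n; apply: feq_sum => i; apply: feq_sum => j.
  exact: D_scalel (E_ev0 _ _ _) (E_ev0 _ _ _).
apply: (feq_ext H) => // w; by rewrite /tN fs_map sum_idx.
Qed.

Lemma L_flip N : feq (fs (tflip (tN N))) (SN N).
Proof.
have H : feq (fun w => \sum_(n < N) \sum_(i < n.+1) \sum_(j < n.+1)
     delta ((fun p : U * U => (p.2, p.1)) (pr (nat_of_ord n, nat_of_ord i, nat_of_ord j))) w)
   (fun w => \sum_(n < N) \sum_(i < n.+1) \sum_(j < n.+1) cf n * delta (E n j i, E n i j) w).
  apply: feq_sum => n; apply: feq_sum => i; apply: feq_sum => j.
  exact: D_scaler (E_ev0 _ _ _) (E_ev0 _ _ _).
apply: (feq_ext H) => w.
  by rewrite /tflip /tN -map_comp fs_map sum_idx.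
rewrite /SN; apply: eq_bigr => n _; exact: exchange_big.
Qed.

Definition LN (a : U) N : F := fun w => \sum_(n < N) \sum_(i < n.+1) \sum_(j < n.+1)
   cf n * \sum_(l < n.+1) (a n l i * delta (E n l j, E n j i) w).

Definition RN (a : U) N : F := fun w => \sum_(n < N) \sum_(i < n.+1) \sum_(j < n.+1)
   cf n * \sum_(l < n.+1) (a n i l * delta (E n i j, E n j l) w).

Lemma L_left a N : feq (fs (tlmul a (tN N))) (LN a N).
Proof.
have H : feq (fun w => \sum_(n < N) \sum_(i < n.+1) \sum_(j < n.+1)
     delta (sscale (cf n) (msum (index_enum 'I_n.+1) (fun l : 'I_n.+1 => sscale (a n l i) (E n l j))), E n j i) w)
   (LN a N).
  apply: feq_sum => n; apply: feq_sum => i; apply: feq_sum => j.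
  apply: feq_trans; first apply: D_scalel.
  - by apply: ev0_msum => l; apply: ev0_scale; apply: E_ev0.
  - exact: E_ev0.
  apply: feq_scale.
  apply: feq_trans; first apply: D_suml.
  - by move=> l; apply: ev0_scale; apply: E_ev0.
  - exact: E_ev0.
  apply: feq_sum => l; exact: D_scalel (E_ev0 _ _ _) (E_ev0 _ _ _).
apply: (feq_ext H) => // w.
rewrite /tlmul /tN -map_comp fs_map sum_idx; apply: eq_bigr => n _; apply: eq_bigr => i _; apply: eq_bigr => j _.
by rewrite /= smul_scalel smul_El.
Qed.

Lemma L_right a N : feq (fs (trmul (tN N) a)) (RN a N).
Proof.
have H : feq (fun w => \sum_(n < N) \sum_(i < n.+1) \sum_(j < n.+1)
     delta (sscale (cf n) (E n i j), msum (index_enum 'I_n.+1) (fun l : 'I_n.+1 => sscale (a n i l) (E n j l))) w)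
   (RN a N).
  apply: feq_sum => n; apply: feq_sum => i; apply: feq_sum => j.
  apply: feq_trans; first apply: D_scalel.
  - exact: E_ev0.
  - by apply: ev0_msum => l; apply: ev0_scale; apply: E_ev0.
  apply: feq_scale.
  apply: feq_trans; first apply: D_sumr.
  - by move=> l; apply: ev0_scale; apply: E_ev0.
  - exact: E_ev0.
  apply: feq_sum => l; exact: D_scaler (E_ev0 _ _ _) (E_ev0 _ _ _).
apply: (feq_ext H) => // w.
rewrite /trmul /tN -map_comp fs_map sum_idx; apply: eq_bigr => n _; apply: eq_bigr => i _; apply: eq_bigr => j _.
by rewrite /= smul_Er.
Qed.

Lemma LR a N w : LN a N w = RN a N w.
Proof.
rewrite /LN /RN; apply: eq_bigr => n _.
under eq_bigr => i _ do under eq_bigr => j _ do rewrite mulr_sumr.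
under [RHS]eq_bigr => i _ do under eq_bigr => j _ do rewrite mulr_sumr.
set g := fun (x j y : 'I_n.+1) => cf n * (a n x y * delta (E n x j, E n j y) w).
transitivity (\sum_(i < n.+1) \sum_(j < n.+1) \sum_(l < n.+1) g l j i); first by [].
transitivity (\sum_(i < n.+1) \sum_(j < n.+1) \sum_(l < n.+1) g i j l); last by [].
under eq_bigr => i _ do rewrite exchange_big.
rewrite exchange_big; apply: eq_bigr => i _; exact: exchange_big.
Qed.


Lemma limn_const (c : R) : limn (fun _ : nat => c) = c.
Proof. exact: lim_cst. Qed.

Lemma tpiE (t : ftensor R) k : tpi t k = \sum_(p <- t) p.1 k *m p.2 k.
Proof. by elim: t => [|p t IH]; rewrite ?big_nil ?big_cons //= /sadd /smul -IH. Qed.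

Lemma tpi_tN N k : tpi (tN N) k = if (k < N)%N then 1 else 0.
Proof.
rewrite tpiE /tN big_map sum_idx /=.
case: ltnP => hk.
  rewrite (bigD1 (Ordinal hk)) //= [X in _ + X]big1 => [|n nk]; last first.
    apply: big1 => i _; apply: big1 => j _.
    have ne : k != n by apply: contra nk => /eqP e; apply/eqP/val_inj.
    by rewrite /sscale /E (negbTE ne) scaler0 mul0mx.
  rewrite addr0.
  under eq_bigr => i _ do under eq_bigr => j _ do rewrite /sscale /E eqxx !inord_val -scalemxAl.
  under eq_bigr => i _ do rewrite -scaler_sumr.
  rewrite -scaler_sumr M3 scalerA /cf mulVf ?scale1r //.
  by rewrite pnatr_eq0.
rewrite big1 // => n _; apply: big1 => i _; apply: big1 => j _.
have ne : k != n by rewrite neq_ltn (leq_trans (ltn_ord n) hk) orbT.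
by rewrite /sscale /E (negbTE ne) scaler0 mul0mx.
Qed.

Lemma defect_tN N (a : U) k : sadd (smul (tpi (tN N)) a) (sopp a) k = if (k < N)%N then 0 else - a k.
Proof.
rewrite /sadd /smul /sopp tpi_tN; case: ifP => _; first by rewrite mul1mx subrr.
by rewrite mul0mx add0r.
Qed.


Lemma tN_cauchy N e : 0 < e -> projnorm (tsub (tN N) (tN N)) < e.
Proof.
move=> he; rewrite projnorm0 //; apply: tequiv_nil; apply: tsub_zero; [exact: evl_tN|exact: feq_refl].
Qed.

Lemma evl_trmul a N : evl (trmul (tN N) a).
Proof.
rewrite /trmul /tN -map_comp; apply: evl_map => q /=; split.
  by apply: ev0_scale; apply: E_ev0.
by apply: ev0_mulr; apply: E_ev0.
Qed.

Lemma main_R : c0_Mn_symm_pseudo_amenable R.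
Proof.
exists nat, (fun m n => (m <= n)%N), (fun N => fun _ : nat => tN N).
split. split; [by exists 0%N | by move=> i | by move=> i j k h1 h2; exact: leq_trans h1 h2 | by move=> i j; exists (maxn i j); rewrite leq_maxl leq_maxr].
split.
  move=> N; split; first by move=> _; apply: evl_tinU; apply: evl_tN.
  by move=> e he; exists 0%N => k l _ _; apply: tN_cauchy.
split.
  move=> N; rewrite /pt_symmetric /ptnorm /ptsub /ptflip limn_const.
  apply: projnorm0; apply: tequiv_nil; apply: tsub_zero; first exact: evl_tN.
  exact: feq_trans (L_flip N) (feq_sym (L_fs N)).
split.
  move=> a ha e he; exists 0%N => N _.
  rewrite /ptnorm /ptsub /ptlmul /ptrmul limn_const projnorm0 ?normr0 //.
  apply: tequiv_nil; apply: tsub_zero; first exact: evl_trmul.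
  apply: feq_trans (L_left a N) _; apply: feq_trans (feq_sym (L_right a N)).
  by apply: (feq_ext (feq_refl (RN a N))) => // w; rewrite LR.
move=> a ha e he.
have he2 : 0 < e / 2 by rewrite divr_gt0.
have [M HM] := c0_lt ha he2.
exists M => N hMN; rewrite /pi_defect limn_const.
rewrite ger0_norm ?supnorm_ge0 //.
apply: (le_lt_trans (y := e / 2)); last by rewrite ltr_pdivrMr // ltr_pMr // ltr1n.
apply: supnorm_le => k; rewrite defect_tN; case: ltnP => hk.
  by rewrite opnorm0 ltW.
rewrite opnormN; apply: ltW; apply: le_lt_trans (HM k (leq_trans hMN hk)).
exact: ler_norm.
Qed.

End P.

Theorem mainTheorem6 (R : realType) : c0_Mn_symm_pseudo_amenable R.
Proof. exact: main_R. Qed.
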